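(* Let $a\ge1$ be an integer, let $t_{d-a},\ldots,t_d\in\mathbb{C}^*$, and let $P(Y)=\sum_{l=0}^d p_lY^l\in R[Y]$ be an $m$-triangular polynomial of degree $d$ for some integer $m\ge 1$. Then the map $\mathbb{C}^a\times\mathbb{C}^*\to\mathbb{C}^a\times\mathbb{C}^*$, $x\mapsto (t_{d-a}p_{d-a}(x),\ldots,t_dp_d(x))$, is surjective.
   Context: Fix a positive integer $a$ and variables $u_0,\ldots,u_a$. Let $R=\mathbb{C}[u_0,\ldots,u_{a-1}][u_a,u_a^{-1}]$ and $U(Y)=\sum_{j=0}^a u_jY^j\in R[Y]$. For $r\in R$ and $x=(x_0,\ldots,x_a)\in\mathbb{C}^a\times\mathbb{C}^*$, $r(x)\in\mathbb{C}$ denotes the evaluation of $r$ at $u_i=x_i$. $\mathbb{Q}_+$ denotes the positive rational numbers. For an integer $m\ge1$, a polynomial $P(Y)=\sum_{l=0}^dp_lY^l\in R[Y]$ of degree $d\ge a$ is called $m$-triangular (or $(m,U)$-triangular) if for every $l$ with $d-a\le l\le d$ one has $p_l=q_lu_a^{m-1}u_{a-d+l}+P_l(u_{a-d+l+1},\ldots,u_a)$ for some $q_l\in\mathbb{Q}_+$ and some polynomial $P_l\in\mathbb{C}[u_{a-d+l+1},\ldots,u_a]$ (for $l=d$ this means $p_d=q_du_a^m$). *)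

(* Defs.v *)
From HB Require Import structures.
From mathcomp Require Import all_boot all_order all_algebra.
From mathcomp Require Import reals.
From mathcomp Require Import complex.
From mathcomp Require Import mpoly.

Set Implicit Arguments.
Unset Strict Implicit.
Unset Printing Implicit Defensive.

Import Order.TTheory GRing.Theory Num.Theory.
Local Open Scope ring_scope.

(* Variables u_0, ..., u_a are indexed by 'I_(a.+1); u_a is [ord_max]. *)

(* An element of R = C[u_0,...,u_{a-1}][u_a, u_a^{-1}] is represented by a
   pair (k, q) with k : nat and q a polynomial in C[u_0,...,u_a], standing
   for the Laurent polynomial q / u_a^k. *)
Definition laurent (C : nzRingType) (a : nat) := (nat * {mpoly C[a.+1]})%type.

Definition uvar (C : nzRingType) (a j : nat) : {mpoly C[a.+1]} := 'X_(inord j).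

(* r = q in R, for a genuine polynomial q : the representative (k, q') of r
   satisfies q' = u_a^k * q. *)
Definition laurent_eqpoly (C : nzRingType) (a : nat) (r : laurent C a)
  (q : {mpoly C[a.+1]}) : Prop :=
  r.2 = (uvar C a a) ^+ r.1 * q.

Definition laurent_neq0 (C : nzRingType) (a : nat) (r : laurent C a) : bool :=
  r.2 != 0.

Definition laurent_eval (C : fieldType) (a : nat) (r : laurent C a)
  (x : 'I_(a.+1) -> C) : C :=
  r.2.@[x] / (x ord_max) ^+ r.1.

Definition only_vars_above (C : nzRingType) (a k : nat) (q : {mpoly C[a.+1]}) :
  Prop :=
  forall mo : 'X_{1..a.+1}, mo \in msupp q ->
    forall j : 'I_(a.+1), (j <= k)%N -> mo j = 0%N.

(* A polynomial P(Y) = \sum_{l=0}^d p_l Y^l in R[Y], given by its coefficient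
   family p : 'I_(d.+1) -> R, is (m,U)-triangular: d >= a and for every
   d-a <= l <= d, p_l = q_l u_a^(m-1) u_(a-d+l) (index l-(d-a) in nat) + P_l(u_(a-d+l+1),...,u_a)
   with q_l a positive rational and P_l a polynomial (P_d = 0). *)
Definition triangular (C : fieldType) (a d m : nat)
  (p : 'I_(d.+1) -> laurent C a) : Prop :=
  (a <= d)%N /\
  forall l : 'I_(d.+1), (d - a <= l)%N ->
    exists q : rat, 0 < q /\
    exists Pl : {mpoly C[a.+1]},
      only_vars_above (l - (d - a)) Pl /\
      (l = ord_max -> Pl = 0) /\
      laurent_eqpoly (p l)
        (ratr q *: ((uvar C a a) ^+ m.-1 * uvar C a (l - (d - a))) + Pl).

Arguments triangular {C} a d m p.

(* Main.v *)
Require Import Defs.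
From HB Require Import structures.
From mathcomp Require Import all_boot all_order all_algebra.
From mathcomp Require Import reals complex mpoly.

Import Order.TTheory GRing.Theory Num.Theory.
Local Open Scope ring_scope.

Lemma dep_above (C : fieldType) (a k : nat) (P : {mpoly C[a.+1]})
  (x x' : 'I_(a.+1) -> C) :
  only_vars_above k P -> (forall j : 'I_(a.+1), (k < j)%N -> x j = x' j) ->
  P.@[x] = P.@[x'].
Proof.
move=> hP hx; rewrite !mevalE; apply: eq_big_seq => mo hmo.
congr (_ * _); apply: eq_bigr => j _.
case: (leqP j k) => hj; first by rewrite (hP mo hmo j hj) !expr0.
by rewrite hx.
Qed.

Arguments dep_above {C a k P x x'}.

Lemma key (R : realType) (a d m : nat)
  (p : 'I_(d.+1) -> laurent R[i] a) :
  triangular a d m p -> forall i : 'I_(a.+1),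
  exists c : R[i], exists P : {mpoly R[i][a.+1]},
    c != 0 /\ only_vars_above i P /\ (i = ord_max -> P = 0) /\
    forall x, x ord_max != 0 ->
      laurent_eval (p (inord (d - a + i))) x =
        c * x ord_max ^+ m.-1 * x i + P.@[x].
Proof.
move=> [had htr] i.
have hi : (d - a + i <= d)%N.
  by rewrite -{2}(subnK had) leq_add2l -ltnS.
have hl : val (inord (d - a + i) : 'I_(d.+1)) = (d - a + i)%N by rewrite /= inordK // ltnS.
have := htr (inord (d - a + i)); rewrite hl leq_addr.
move=> /(_ isT) [q [q0 [Pl [hov [hmax heq]]]]].
have e1 : (d - a + i - (d - a) = i)%N by rewrite addKn.
rewrite e1 in hov heq.
exists (ratr q), Pl; split; first by rewrite lt0r_neq0 // ltr0q.
split=> //; split.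
  move=> ei; apply: hmax; apply: val_inj; rewrite hl ei /=; exact: subnK.
move=> x hx; rewrite /laurent_eval heq.
have ea : uvar R[i] a a = 'X_ord_max.
  by rewrite /uvar; congr 'X_ _; apply: val_inj; rewrite /= inordK.
have ei : uvar R[i] a i = 'X_i by rewrite /uvar inord_val.
rewrite ea ei mevalM rmorphXn /= mevalD mevalZ mevalM rmorphXn /= !mevalXU.
by rewrite mulrC mulrA mulVf ?mul1r ?expf_neq0 // mulrA.
Qed.

Theorem mainTheorem2 (R : realType) (a d m : nat)
  (p : 'I_(d.+1) -> laurent R[i] a) (t : 'I_(a.+1) -> R[i]) :
  (0 < a)%N -> (0 < m)%N ->
  (forall i, t i != 0) ->
  laurent_neq0 (p ord_max) ->
  triangular a d m p ->
  forall y : 'I_(a.+1) -> R[i], y ord_max != 0 ->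
    exists x : 'I_(a.+1) -> R[i], x ord_max != 0 /\
      forall i : 'I_(a.+1),
        t i * laurent_eval (p (inord (d - a + i))) x = y i.
Proof.
move=> a0 m0 ht _ htr y ya.
have K := @key R a d m p htr.
suff H : forall n, (n <= a)%N -> exists x : 'I_(a.+1) -> R[i], x ord_max != 0 /\
      forall i : 'I_(a.+1), (a - n <= i)%N ->
        t i * laurent_eval (p (inord (d - a + i))) x = y i.
  have [x [hx hall]] := H a (leqnn a).
  by exists x; split=> // i; apply: hall; rewrite subnn.
elim=> [_|n IH hn].
  have [c [P [c0 [_ [hP hev]]]]] := K ord_max.
  rewrite (hP erefl) in hev.
  set r := m.-root (y ord_max / (t ord_max * c)).
  have hr : r ^+ m = y ord_max / (t ord_max * c) by exact: rootCK.
  have r0 : r != 0.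
    apply/eqP=> r0; move: hr; rewrite r0 expr0n gtn_eqF //.
    move/esym/eqP; rewrite mulf_eq0 invr_eq0 mulf_eq0 (negbTE ya) (negbTE c0).
    by rewrite (negbTE (ht _)).
  exists (fun _ => r); split=> // i.
  rewrite subn0 => hi.
  have -> : i = ord_max by apply: val_inj; apply/eqP; rewrite eqn_leq hi -ltnS ltn_ord.
  rewrite hev // meval0 addr0 -mulrA -exprSr prednK // hr.
  have tc : t ord_max * c != 0 by rewrite mulf_neq0.
  by rewrite mulrA mulrC -mulrA mulVf ?mulr1.
have [x [hx hall]] := IH (ltnW hn).
set kk : 'I_(a.+1) := inord (a - n.+1).
have hkk : val kk = (a - n.+1)%N by rewrite /= inordK // ltnS leq_subr.
have hka : (kk < a)%N by rewrite hkk ltn_subrL.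
have kmax : kk != ord_max by apply/negP=> /eqP/(congr1 val) /= e; rewrite e ltnn in hka.
have [c [P [c0 [hov [_ hev]]]]] := K kk.
set v := (y kk / t kk - P.@[x]) / (c * x ord_max ^+ m.-1).
set x' := fun j => if j == kk then v else x j.
have xa : x' ord_max = x ord_max by rewrite /x' eq_sym (negbTE kmax).
have agree : forall k0 : nat, (kk <= k0)%N -> forall j : 'I_(a.+1), (k0 < j)%N -> x j = x' j.
  move=> k0 hk0 j hj; rewrite /x'; case: eqP => // ej.
  by rewrite ej ltnNge hk0 in hj.
exists x'; split; first by rewrite xa.
move=> i hi.
case: (eqVneq i kk) => [->|ik].
  rewrite hev ?xa // -(dep_above hov (agree _ (leqnn _))) /x' eqxx /v.
  rewrite [_ * (_ / _)]mulrC -mulrA mulVf ?mulf_neq0 ?expf_neq0 //.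
  by rewrite mulr1 subrK mulrC -mulrA mulVf ?mulr1.
have hki : (kk < i)%N.
  rewrite ltn_neqAle hkk hi andbT.
  apply: contraNneq ik => e; apply/eqP; apply: val_inj; by rewrite /= hkk e.
have hi' : (a - n <= i)%N by move: hki; rewrite hkk -(subnSK hn).
have [ci [Pi [_ [hovi [_ hevi]]]]] := K i.
rewrite -(hall i hi') !hevi ?xa //.
rewrite -(dep_above hovi (agree i _)); last exact: ltnW.
by rewrite /x' (negbTE ik).
Qed.
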